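(* Let $\theta$ be an irrational number whose best rational approximants $(p_n/q_n)_{n\ge0}$ satisfy $q_n^{-1}\log q_{n+1}\to\infty$ as $n\to\infty$. For any subsequence $q'$ of $(q_n)_{n\ge0}$ and any $z\in\mathbb{C}$ with $|z|>1$, there exists a dense $G_\delta$-subset $E(z)$ of $l^\infty$ such that for every $u\in E(z)$, \[\sup_{N\in\mathbb{N}}|\varphi'_{N\theta,q',u}(z)|=+\infty,\] where $\varphi'_{N\theta,q',u}$ denotes the complex derivative of the entire function $\varphi_{N\theta,q',u}$.
   Context: Best rational approximants $p_n/q_n$ of an irrational $\theta$ are its continued fraction convergents, with $\gcd(p_n,q_n)=1$, $q_n\ge0$. A subsequence $q'$ of $(q_n)$ means $q'_n=q_{k_n}$ with $k_n$ strictly increasing. $l^\infty$ is the complex Banach space of bounded complex sequences $u=(u_m)_{m\ge0}$ with the sup norm. For $\mu\in\mathbb{R}$, $\varphi_{\mu,q',u}(z)=z e^{2\pi i\mu}\sum_{n=0}^\infty u_{q'_n}(1-e^{2\pi i q'_n\mu})z^{q'_n}$, where $u_{q'_n}$ is the $q'_n$-th term of $u$; under the growth hypothesis on $(q_n)$, $\varphi_{N\theta,q',u}$ is entire for every integer $N\ge0$. *)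

(* Defs.v *)
From Stdlib Require Import Reals Lra Lia ZArith ClassicalEpsilon.
Open Scope R_scope.

Definition Cx := (R * R)%type.
Definition RtoC (x : R) : Cx := (x, 0).
Definition C0 : Cx := (0, 0).
Definition C1 : Cx := (1, 0).
Definition Cadd (z w : Cx) : Cx := (fst z + fst w, snd z + snd w).
Definition Copp (z : Cx) : Cx := (- fst z, - snd z).
Definition Csub (z w : Cx) : Cx := Cadd z (Copp w).
Definition Cmul (z w : Cx) : Cx :=
  (fst z * fst w - snd z * snd w, fst z * snd w + snd z * fst w).
Definition Cmod (z : Cx) : R := sqrt (fst z ^ 2 + snd z ^ 2).
Fixpoint Cpow (z : Cx) (n : nat) : Cx :=
  match n with O => C1 | S m => Cmul z (Cpow z m) end.
Definition Cexpi (t : R) : Cx := (cos t, sin t).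

Fixpoint Cpartial (a : nat -> Cx) (n : nat) : Cx :=
  match n with O => C0 | S m => Cadd (Cpartial a m) (a m) end.
Definition Cseries_conv (a : nat -> Cx) (l : Cx) : Prop :=
  forall eps, 0 < eps -> exists N, forall n, (N <= n)%nat ->
    Cmod (Csub (Cpartial a n) l) < eps.
Definition Csum (a : nat -> Cx) : Cx :=
  epsilon (inhabits C0) (fun l => Cseries_conv a l).

Definition has_cderiv (f : Cx -> Cx) (z d : Cx) : Prop :=
  forall eps, 0 < eps -> exists delta, 0 < delta /\
    forall w, Cmod (Csub w z) < delta ->
      Cmod (Csub (Csub (f w) (f z)) (Cmul d (Csub w z))) <= eps * Cmod (Csub w z).

Definition irrational (x : R) : Prop :=
  ~ exists (p q : Z), q <> 0%Z /\ x = IZR p / IZR q.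
(* Int_part r = up r - 1 = floor r *)
Fixpoint cf_rest (theta : R) (n : nat) : R :=
  match n with
  | O => theta
  | S m => / (cf_rest theta m - IZR (Int_part (cf_rest theta m)))
  end.
Definition cf_a (theta : R) (n : nat) : Z := Int_part (cf_rest theta n).
(* (q_{n-1}, q_n), with q_{-1} = 0, q_0 = 1, q_{n+1} = a_{n+1} q_n + q_{n-1} *)
Fixpoint cf_qpair (theta : R) (n : nat) : Z * Z :=
  match n with
  | O => (0%Z, 1%Z)
  | S m => let (qa, qb) := cf_qpair theta m in
           (qb, (cf_a theta (S m) * qb + qa)%Z)
  end.
Definition cf_q (theta : R) (n : nat) : Z := snd (cf_qpair theta n).

Definition phi (mu : R) (q' : nat -> Z) (u : nat -> Cx) (z : Cx) : Cx :=
  Cmul (Cmul z (Cexpi (2 * PI * mu)))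
    (Csum (fun n => Cmul (Cmul (u (Z.to_nat (q' n)))
                              (Csub C1 (Cexpi (2 * PI * IZR (q' n) * mu))))
                        (Cpow z (Z.to_nat (q' n))))).

Definition bounded_seq (u : nat -> Cx) : Prop :=
  exists M, forall m, Cmod (u m) <= M.
Definition linf_open (O : (nat -> Cx) -> Prop) : Prop :=
  (forall u, O u -> bounded_seq u) /\
  forall u, O u -> exists r, 0 < r /\
    forall v, bounded_seq v -> (forall m, Cmod (Csub (v m) (u m)) <= r) -> O v.
Definition linf_dense (E : (nat -> Cx) -> Prop) : Prop :=
  forall u, bounded_seq u -> forall eps, 0 < eps ->
    exists v, E v /\ forall m, Cmod (Csub (v m) (u m)) <= eps.
Definition linf_Gdelta (E : (nat -> Cx) -> Prop) : Prop :=
  exists O : nat -> ((nat -> Cx) -> Prop),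
    (forall j, linf_open (O j)) /\
    forall u, E u <-> (forall j, O j u).

(* Main.v *)
From Stdlib Require Import Reals Lra Lia Psatz ZArith ClassicalEpsilon FunctionalExtensionality Classical.
Require Import Defs.
From Coquelicot Require Import Coquelicot.
Open Scope R_scope.

Lemma Cpartial_sum_n (a : nat -> C) n : Cpartial a (S n) = sum_n a n.
Proof.
  induction n.
  - simpl. rewrite sum_O. unfold Cadd, C0. destruct (a 0%nat); simpl; f_equal; ring.
  - change (Cpartial a (S (S n))) with (Cadd (Cpartial a (S n)) (a (S n))).
    rewrite IHn, sum_Sn. reflexivity.
Qed.

Lemma Cmod_sub_sym (x y : C) : Cmod (x - y)%C = Cmod (y - x)%C.
Proof. replace (y - x)%C with (- (x - y))%C by ring. now rewrite Cmod_opp. Qed.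

Lemma Cmod_eq0_sub (x y : C) : (forall eps, 0 < eps -> Cmod (x - y)%C < eps) -> x = y.
Proof.
  intros H. destruct (Req_dec (Cmod (x - y)%C) 0) as [E|E].
  - apply Cmod_eq_0 in E. replace x with ((x - y) + y)%C by ring. rewrite E. ring.
  - exfalso. specialize (H (Cmod (x-y)%C)). pose proof (Cmod_ge_0 (x-y)%C). lra.
Qed.

Lemma conv_unique a l1 l2 : Cseries_conv a l1 -> Cseries_conv a l2 -> l1 = l2.
Proof.
  intros H1 H2. apply Cmod_eq0_sub. intros eps Heps.
  destruct (H1 (eps/2)) as [N1 HN1]; [lra|].
  destruct (H2 (eps/2)) as [N2 HN2]; [lra|].
  specialize (HN1 (max N1 N2) ltac:(lia)). specialize (HN2 (max N1 N2) ltac:(lia)).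
  set (S := Cpartial a (max N1 N2)) in *.
  change (Cmod (S - l1)%C < eps/2) in HN1. change (Cmod (S - l2)%C < eps/2) in HN2.
  replace (l1 - l2)%C with ((S - l2) - (S - l1))%C by ring.
  eapply Rle_lt_trans. unfold Cminus at 1. apply Cmod_triangle. rewrite Cmod_opp. lra.
Qed.

Lemma Csum_spec a l : Cseries_conv a l -> Csum a = l.
Proof.
  intros H. unfold Csum.
  assert (Hc : Cseries_conv a (epsilon (inhabits C0) (fun l => Cseries_conv a l))).
  { apply epsilon_spec. now exists l. }
  eapply conv_unique; eauto.
Qed.

Lemma ex_series_conv (a : nat -> C) : ex_series a -> Cseries_conv a (Csum a).
Proof.
  intros [l Hl]. assert (Cseries_conv a l).
  { intros eps Heps. 
    assert (Hs : 0 < eps / 2) by lra.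
    destruct (Hl _ (locally_ball l (mkposreal _ Hs))) as [N HN].
    exists (S N). intros n Hn. destruct n; [lia|].
    rewrite Cpartial_sum_n. specialize (HN n ltac:(lia)).
    apply C_NormedModule_mixin_compat2 in HN. simpl in HN.
    change (Cmod (sum_n a n - l)%C < eps).
    assert (sqrt 2 < 2). { replace 2 with (sqrt 4) at 2 by (rewrite <- (sqrt_square 2); [f_equal; ring|lra]). apply sqrt_lt_1; lra. }
    assert (E : Cmod (sum_n a n - l)%C = Cmod (minus (sum_n a n) l)) by reflexivity.
    rewrite E. pose proof (sqrt_pos 2).
    assert (sqrt 2 * (eps/2) < 2 * (eps/2)) by (apply Rmult_lt_compat_r; lra).
    eapply Rlt_le_trans; [apply HN|]. lra. }
  now rewrite (Csum_spec _ _ H).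
Qed.
Fixpoint Rpsum (g : nat -> R) (n : nat) : R :=
  match n with O => 0 | S m => Rpsum g m + g m end.

Lemma Cpartial_bound (a : nat -> C) (g : nat -> R) :
  (forall n, Cmod (a n) <= g n) -> forall n, Cmod (Cpartial a n) <= Rpsum g n.
Proof.
  intros H n. induction n; simpl.
  - change (Cmod (RtoC 0) <= 0). rewrite Cmod_0. lra.
  - change (Cmod (Cpartial a n + a n)%C <= Rpsum g n + g n).
    eapply Rle_trans. apply Cmod_triangle. specialize (H n). lra.
Qed.

Lemma conv_bound (a : nat -> C) l S :
  Cseries_conv a l -> (forall n, Cmod (Cpartial a n) <= S) -> Cmod l <= S.
Proof.
  intros Hc Hb. apply Rnot_lt_le. intros Hlt.
  destruct (Hc (Cmod l - S)) as [N HN]; [lra|].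
  specialize (HN N (le_n N)). specialize (Hb N).
  change (Cmod (Cpartial a N - l)%C < Cmod l - S) in HN.
  assert (Cmod l <= Cmod (Cpartial a N) + Cmod (l - Cpartial a N)%C).
  { replace l with (Cpartial a N + (l - Cpartial a N))%C at 1 by ring. apply Cmod_triangle. }
  rewrite Cmod_sub_sym in HN. lra.
Qed.

Lemma Rpsum_geom K n : 0 <= K -> Rpsum (fun i => K * (1/2)^i) n <= 2 * K.
Proof.
  intros HK. assert (forall n, Rpsum (fun i => K * (1/2)^i) n = 2 * K - 2 * K * (1/2)^n).
  { induction n0; simpl; [lra|]. rewrite IHn0. field. }
  rewrite H. assert (0 <= (1/2)^n) by (apply pow_le; lra). nra.
Qed.

Lemma dom_ex (a : nat -> C) K : (forall n, Cmod (a n) <= K * (1/2)^n) -> ex_series a.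
Proof.
  intros H. apply (ex_series_le (K := C_AbsRing) (V := C_CompleteNormedModule) a (fun n => K * (1/2)^n)).
  - intros n. exact (H n).
  - apply (ex_series_scal_l (V := R_NormedModule) K (fun n => (1/2)^n)).
    apply ex_series_geom. rewrite Rabs_pos_eq; lra.
Qed.

Lemma dom_sum (a : nat -> C) K : (forall n, Cmod (a n) <= K * (1/2)^n) ->
  Cseries_conv a (Csum a) /\ Cmod (Csum a) <= 2 * K.
Proof.
  intros H. assert (HK : 0 <= K).
  { specialize (H 0%nat). simpl in H. pose proof (Cmod_ge_0 (a 0%nat)). lra. }
  pose proof (ex_series_conv a (dom_ex a K H)) as Hc. split; auto.
  apply (conv_bound a); auto. intros n.
  eapply Rle_trans. apply (Cpartial_bound a _ H). now apply Rpsum_geom.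
Qed.

Lemma Cpartial_add a b n : Cpartial (fun i => a i + b i)%C n = (Cpartial a n + Cpartial b n)%C.
Proof.
  induction n; simpl.
  - change ((0%R,0%R) = ((0%R,0%R) + (0%R,0%R))%C). apply injective_projections; simpl; ring.
  - change (Cpartial (fun i => a i + b i)%C n + (a n + b n) = (Cpartial a n + a n) + (Cpartial b n + b n))%C.
    rewrite IHn. ring.
Qed.

Lemma Cpartial_scal c a n : Cpartial (fun i => c * a i)%C n = (c * Cpartial a n)%C.
Proof.
  induction n; simpl.
  - change ((0%R,0%R) = (c * (0%R,0%R))%C). apply injective_projections; simpl; ring.
  - change (Cpartial (fun i => c * a i)%C n + (c * a n) = c * (Cpartial a n + a n))%C.
    rewrite IHn. ring.
Qed.

Lemma conv_add a b la lb : Cseries_conv a la -> Cseries_conv b lb ->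
  Cseries_conv (fun i => a i + b i)%C (la + lb)%C.
Proof.
  intros Ha Hb eps He.
  destruct (Ha (eps/2)) as [N1 H1]; [lra|]. destruct (Hb (eps/2)) as [N2 H2]; [lra|].
  exists (max N1 N2). intros n Hn. specialize (H1 n ltac:(lia)). specialize (H2 n ltac:(lia)).
  change (Cmod (Cpartial (fun i => a i + b i)%C n - (la + lb))%C < eps).
  change (Cmod (Cpartial a n - la)%C < eps/2) in H1.
  change (Cmod (Cpartial b n - lb)%C < eps/2) in H2.
  rewrite Cpartial_add.
  replace (Cpartial a n + Cpartial b n - (la + lb))%C with ((Cpartial a n - la) + (Cpartial b n - lb))%C by ring.
  eapply Rle_lt_trans. apply Cmod_triangle. lra.
Qed.

Lemma conv_scal c a la : Cseries_conv a la -> Cseries_conv (fun i => c * a i)%C (c * la)%C.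
Proof.
  intros Ha eps He.
  pose proof (Cmod_ge_0 c).
  destruct (Ha (eps/(Cmod c + 1))) as [N1 H1]. { apply Rdiv_lt_0_compat; lra. }
  exists N1. intros n Hn. specialize (H1 n Hn).
  change (Cmod (Cpartial (fun i => c * a i)%C n - c * la)%C < eps).
  change (Cmod (Cpartial a n - la)%C < eps/(Cmod c + 1)) in H1.
  rewrite Cpartial_scal. replace (c * Cpartial a n - c * la)%C with (c * (Cpartial a n - la))%C by ring.
  rewrite Cmod_mult.
  apply Rle_lt_trans with (Cmod c * (eps / (Cmod c + 1))).
  - apply Rmult_le_compat_l; lra.
  - apply Rmult_lt_reg_r with (Cmod c + 1); [lra|].
    replace (Cmod c * (eps / (Cmod c + 1)) * (Cmod c + 1)) with (Cmod c * eps) by (field; lra). nra.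
Qed.
Fixpoint cf_ppair (theta : R) (n : nat) : Z * Z :=
  match n with
  | O => (1%Z, cf_a theta 0)
  | S m => let (pa, pb) := cf_ppair theta m in
           (pb, (cf_a theta (S m) * pb + pa)%Z)
  end.

Section CF.
Variable theta : R.
Definition qA m := fst (cf_qpair theta m).
Definition qB m := snd (cf_qpair theta m).
Definition pA m := fst (cf_ppair theta m).
Definition pB m := snd (cf_ppair theta m).
Definition eA m := IZR (qA m) * theta - IZR (pA m).
Definition eB m := IZR (qB m) * theta - IZR (pB m).
Definition rr m := cf_rest theta m.
Definition fr m := rr m - IZR (cf_a theta m).

Lemma qA_S m : qA (S m) = qB m.
Proof. unfold qA, qB. simpl. destruct (cf_qpair theta m). reflexivity. Qed.
Lemma qB_S m : qB (S m) = (cf_a theta (S m) * qB m + qA m)%Z.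
Proof. unfold qA, qB. simpl. destruct (cf_qpair theta m). reflexivity. Qed.
Lemma pA_S m : pA (S m) = pB m.
Proof. unfold pA, pB. simpl. destruct (cf_ppair theta m). reflexivity. Qed.
Lemma pB_S m : pB (S m) = (cf_a theta (S m) * pB m + pA m)%Z.
Proof. unfold pA, pB. simpl. destruct (cf_ppair theta m). reflexivity. Qed.
Lemma rr_S m : rr (S m) = / fr m.
Proof. reflexivity. Qed.
Lemma eA_S m : eA (S m) = eB m.
Proof. unfold eA, eB. now rewrite qA_S, pA_S. Qed.
Lemma eB_S m : eB (S m) = IZR (cf_a theta (S m)) * eB m + eA m.
Proof. unfold eA, eB. rewrite qB_S, pB_S, !plus_IZR, !mult_IZR. ring. Qed.
Lemma fr_bounds m : 0 <= fr m < 1.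
Proof. unfold fr, cf_a. destruct (base_Int_part (rr m)). unfold rr in *. lra. Qed.

Hypothesis Hirr : irrational theta.

Lemma not_rat (p q : Z) : (q <> 0)%Z -> IZR q * theta <> IZR p.
Proof.
  intros Hq E. apply Hirr. exists p, q. split; auto.
  rewrite <- E. field. now apply not_0_IZR.
Qed.

Definition Pinv m := fr m <> 0 /\ eB m * rr (S m) + eA m = 0 /\ (1 <= qB m)%Z /\ (0 <= qA m)%Z
   /\ IZR (qB m) * Rabs (eA m) + IZR (qA m) * Rabs (eB m) = 1.

Lemma Pinv_all m : Pinv m.
Proof.
  induction m.
  - assert (Hf : fr 0 <> 0).
    { intros E. apply (not_rat (cf_a theta 0) 1); [lia|]. unfold fr, rr in E. simpl in E |- *. lra. }
    unfold Pinv. unfold eA, eB, qA, qB, pA, pB. simpl. repeat split; auto; try lia.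
    + rewrite rr_S. unfold fr, rr in Hf |- *. simpl in Hf |- *. field. auto.
    + rewrite Rabs_left by lra. lra.
  - destruct IHm as (Hf & HJ & Hq1 & Hq0 & HF).
    destruct (fr_bounds m) as [Hf0 Hf1].
    assert (Hr : 1 < rr (S m)). { rewrite rr_S. apply Rmult_lt_reg_r with (fr m); [lra|].
      rewrite Rinv_l by auto. lra. }
    assert (Ha : (1 <= cf_a theta (S m))%Z).
    { destruct (base_Int_part (rr (S m))). unfold cf_a.
      assert (0 < IZR (Int_part (rr (S m)))) by (unfold rr in *; lra).
      apply lt_IZR in H1. unfold rr in H1. lia. }
    assert (Hq : (1 <= qB (S m))%Z). { rewrite qB_S. nia. }
    assert (Hf' : fr (S m) <> 0).
    { intros E. apply (not_rat (pB (S m)) (qB (S m))); [lia|].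
      unfold fr in E. assert (rr (S m) = IZR (cf_a theta (S m))) by lra.
      rewrite H in HJ.
      unfold eA, eB in HJ. rewrite qB_S, pB_S, !plus_IZR, !mult_IZR. lra. }
    assert (HJ' : eB (S m) * rr (S (S m)) + eA (S m) = 0).
    { rewrite eA_S, eB_S. rewrite rr_S.
      assert (eA m = - eB m * rr (S m)) by lra. rewrite H.

      replace (IZR (cf_a theta (S m))) with (rr (S m) - fr (S m)) by (unfold fr; ring).
      field. auto. }
    unfold Pinv. repeat split; auto.
    + rewrite qA_S. lia.
    + rewrite qA_S, eA_S.
      assert (Hr2 : 1 < rr (S (S m))). { destruct (fr_bounds (S m)). rewrite rr_S.
        apply Rmult_lt_reg_r with (fr (S m)); [lra|]. rewrite Rinv_l by auto. lra. }
      assert (E1 : Rabs (eB (S m)) = Rabs (eB m) / rr (S (S m))).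
      { assert (eB (S m) = - eB m / rr (S (S m))).
        { rewrite eA_S in HJ'. field_simplify_eq; [lra|lra]. }
        rewrite H, Rabs_div by lra. rewrite Rabs_Ropp. rewrite (Rabs_pos_eq (rr _)) by lra. auto. }
      assert (E2 : Rabs (eA m) = Rabs (eB m) * rr (S m)).
      { assert (eA m = - (eB m * rr (S m))) by lra. rewrite H, Rabs_Ropp, Rabs_mult.
        rewrite (Rabs_pos_eq (rr _)) by lra. auto. }
      assert (E3 : rr (S m) = IZR (cf_a theta (S m)) + / rr (S (S m))).
      { rewrite (rr_S (S m)), Rinv_inv. unfold fr. ring. }
      rewrite qB_S, plus_IZR, mult_IZR, E1. rewrite E2, E3 in HF.
      rewrite <- HF. field. lra.
Qed.

Lemma cf_approx m : exists p : Z, Rabs (IZR (cf_q theta m) * theta - IZR p) <= / IZR (cf_q theta (S m)).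
Proof.
  exists (pB m). destruct (Pinv_all (S m)) as (_ & _ & Hq1 & Hq0 & HF).
  rewrite eA_S in HF. fold (eB m). change (cf_q theta (S m)) with (qB (S m)).
  apply IZR_le in Hq1. apply IZR_le in Hq0.
  pose proof (Rabs_pos (eB (S m))).
  assert (IZR (qB (S m)) * Rabs (eB m) <= 1) by nra.
  apply Rmult_le_reg_l with (IZR (qB (S m))); [lra|]. rewrite Rinv_r by lra. auto.
Qed.

Lemma cf_q_pos m : (1 <= cf_q theta m)%Z.
Proof. destruct (Pinv_all m) as (_&_&H&_). exact H. Qed.

Lemma cf_q_S m : (cf_q theta m <= cf_q theta (S m))%Z /\ ((1 <= m)%nat -> (cf_q theta m < cf_q theta (S m))%Z).
Proof.
  change (cf_q theta) with qB. rewrite qB_S.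
  destruct (Pinv_all (S m)) as (Hf&_&_&_).
  destruct (Pinv_all m) as (_&_&Hq1&Hq0&_).
  assert (Ha : (1 <= cf_a theta (S m))%Z).
  { destruct (fr_bounds m). destruct (Pinv_all m) as (Hfm&_).
    assert (Hr : 1 < rr (S m)). { rewrite rr_S. apply Rmult_lt_reg_r with (fr m); [lra|].
      rewrite Rinv_l by auto. lra. }
    destruct (base_Int_part (rr (S m))). unfold cf_a.
    assert (0 < IZR (Int_part (rr (S m)))) by (unfold rr in *; lra).
    apply lt_IZR in H3. unfold rr in H3. lia. }
  split; [nia|]. intros Hm. destruct m; [lia|].
  rewrite qA_S. destruct (Pinv_all m) as (_&_&Hq1'&_). nia.
Qed.

Lemma Int_not_int (Q : Z) : (1 <= Q)%Z -> IZR Q * theta - IZR (Int_part (IZR Q * theta)) <> 0.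
Proof.
  intros HQ E. apply (not_rat (Int_part (IZR Q * theta)) Q); [lia|]. lra.
Qed.
End CF.
Lemma Cmod_1_expi t : Cmod (Csub C1 (Cexpi t)) = 2 * Rabs (sin (t/2)).
Proof.
  assert (Ht : t = 2 * (t/2)) by field. generalize (t/2) Ht. clear Ht. intros s Ht. subst t.
  unfold Csub, Cadd, Copp, C1, Cexpi, Cmod; simpl.
  rewrite cos_2a_sin, sin_2a.
  replace ((1 + - (1 - 2 * sin s * sin s)) * ((1 + - (1 - 2 * sin s * sin s)) * 1) +
   (0 + - (2 * sin s * cos s)) * ((0 + - (2 * sin s * cos s)) * 1))
  with (Rsqr (2 * sin s) * (Rsqr (sin s) + Rsqr (cos s))) by (unfold Rsqr; ring).
  rewrite sin2_cos2, Rmult_1_r, sqrt_Rsqr_abs.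
  rewrite Rabs_mult, (Rabs_pos_eq 2) by lra. replace (2 * s / 2) with s by field. auto.
Qed.

Lemma abs_sin_le x : Rabs (sin x) <= Rabs x.
Proof.
  assert (H : forall y, 0 < y -> Rabs (sin y) <= y).
  { intros y Hy. pose proof (sin_lt_x y Hy). apply Rabs_le. split; [|lra].
    destruct (Rle_lt_dec 1 y). { pose proof (SIN_bound y). lra. }
    assert (0 < sin y) by (apply sin_gt_0; [lra| pose proof PI2_3_2; lra]). lra. }
  destruct (Rtotal_order x 0) as [Hx|[Hx|Hx]].
  - rewrite <- (Ropp_involutive x), sin_neg, Rabs_Ropp, Rabs_Ropp. rewrite (Rabs_pos_eq (-x)) by lra. apply H. lra.
  - subst. rewrite sin_0, Rabs_R0. lra.
  - rewrite (Rabs_pos_eq x) by lra. auto.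
Qed.

Lemma abs_sin_periodN x (n : nat) : Rabs (sin (x + INR n * PI)) = Rabs (sin x).
Proof.
  induction n. { simpl. now rewrite Rmult_0_l, Rplus_0_r. }
  rewrite S_INR. replace (x + (INR n + 1) * PI) with ((x + INR n * PI) + PI) by ring.
  rewrite neg_sin, Rabs_Ropp. auto.
Qed.

Lemma abs_sin_periodZ x (m : Z) : Rabs (sin (x + IZR m * PI)) = Rabs (sin x).
Proof.
  destruct (Z_le_gt_dec 0 m).
  - rewrite <- (Z2Nat.id m) by lia. rewrite <- INR_IZR_INZ. apply abs_sin_periodN.
  - rewrite <- (abs_sin_periodN (x + IZR m * PI) (Z.to_nat (- m))).
    rewrite INR_IZR_INZ, Z2Nat.id by lia. rewrite opp_IZR. f_equal. f_equal. ring.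
Qed.

Lemma sin_mid y : 1/6 <= y <= 5/6 -> 1/2 <= Rabs (sin (PI * y)).
Proof.
  intros Hy. pose proof PI2_3_2.
  assert (forall v, 1/6 <= v <= 1/2 -> 1/2 <= sin (PI * v)).
  { intros v Hv. rewrite <- sin_PI6. apply sin_incr_1; try nra. }
  destruct (Rle_lt_dec y (1/2)).
  - rewrite Rabs_pos_eq; [apply H0; lra|]. pose proof (H0 y ltac:(lra)); lra.
  - replace (PI * y) with (PI - PI * (1 - y)) by ring. rewrite sin_PI_x.
    rewrite Rabs_pos_eq; [apply H0; lra|]. pose proof (H0 (1 - y) ltac:(lra)); lra.
Qed.
Section Main.
Variable theta : R.
Hypothesis Hirr : irrational theta.
Hypothesis Hgrowth : cv_infty (fun n => ln (IZR (cf_q theta (S n))) / IZR (cf_q theta n)).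
Variable k : nat -> nat.
Hypothesis Hk : forall n, (k n < k (S n))%nat.

Definition Qz n := cf_q theta (k n).
Definition Qn n := Z.to_nat (Qz n).
Definition cc (N : nat) n : Cx := Csub C1 (Cexpi (2 * PI * IZR (Qz n) * (INR N * theta))).

Lemma k_mono a b : (a < b)%nat -> (k a < k b)%nat.
Proof. intros H. induction H. apply Hk. specialize (Hk m). lia. Qed.
Lemma k_ge n : (n <= k n)%nat.
Proof. induction n. lia. specialize (Hk n). lia. Qed.

Lemma q_mono a b : (a <= b)%nat -> (cf_q theta a <= cf_q theta b)%Z.
Proof. intros H. induction H. lia. destruct (cf_q_S theta Hirr m). lia. Qed.
Lemma q_smono a b : (a < b)%nat -> (2 <= b)%nat -> (cf_q theta a < cf_q theta b)%Z.
Proof.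
  intros H Hb. destruct b as [|b]; [lia|]. pose proof (q_mono a b ltac:(lia)).
  destruct (cf_q_S theta Hirr b) as [_ H2]. specialize (H2 ltac:(lia)). lia.
Qed.
Lemma q_ge m : (Z.of_nat m <= cf_q theta m)%Z.
Proof.
  induction m. pose proof (cf_q_pos theta Hirr 0). lia.
  destruct m. pose proof (cf_q_pos theta Hirr 1). lia.
  destruct (cf_q_S theta Hirr (S m)) as [_ H2]. specialize (H2 ltac:(lia)). lia.
Qed.
Lemma Qz_ge n : (Z.of_nat n <= Qz n)%Z.
Proof. unfold Qz. pose proof (q_ge (k n)). pose proof (k_ge n). lia. Qed.
Lemma Qz_pos n : (1 <= Qz n)%Z.
Proof. apply cf_q_pos; auto. Qed.
Lemma Qn_ge n : (n <= Qn n)%nat.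
Proof. unfold Qn. pose proof (Qz_ge n). lia. Qed.
Lemma INR_Qn n : INR (Qn n) = IZR (Qz n).
Proof. unfold Qn. rewrite INR_IZR_INZ, Z2Nat.id; auto. pose proof (Qz_pos n). lia. Qed.
Lemma Qn_inj n n' : (2 <= n')%nat -> Qn n = Qn n' -> n = n'.
Proof.
  intros H2 E. unfold Qn in E. pose proof (Qz_pos n). pose proof (Qz_pos n').
  assert (E' : Qz n = Qz n') by lia. unfold Qz in E'.
  destruct (Nat.lt_total n n') as [Hl|[Hl|Hl]]; auto; exfalso.
  - pose proof (k_mono _ _ Hl). pose proof (k_ge n').
    pose proof (q_smono (k n) (k n') ltac:(lia) ltac:(lia)). lia.
  - pose proof (k_mono _ _ Hl). pose proof (k_ge n'). pose proof (k_ge n).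
    pose proof (q_smono (k n') (k n) ltac:(lia) ltac:(lia)). lia.
Qed.

Lemma cc_le2 N n : Cmod (cc N n) <= 2.
Proof. unfold cc. rewrite Cmod_1_expi. pose proof (SIN_bound (2 * PI * IZR (Qz n) * (INR N * theta) / 2)).
  assert (Rabs (sin (2 * PI * IZR (Qz n) * (INR N * theta) / 2)) <= 1) by (apply Rabs_le; lra). lra. Qed.

Lemma cc_upper N n : Cmod (cc N n) <= 2 * PI * INR N / IZR (cf_q theta (S (k n))).
Proof.
  unfold cc. rewrite Cmod_1_expi.
  destruct (cf_approx theta Hirr (k n)) as [p Hp]. fold (Qz n) in Hp.
  pose proof (cf_q_pos theta Hirr (S (k n))) as Hq. apply IZR_le in Hq.
  replace (2 * PI * IZR (Qz n) * (INR N * theta) / 2) with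
     (PI * INR N * (IZR (Qz n) * theta - IZR p) + IZR (Z.of_nat N * p) * PI)
     by (rewrite mult_IZR, <- INR_IZR_INZ; field).
  rewrite abs_sin_periodZ.
  eapply Rle_trans. apply Rmult_le_compat_l; [lra|]. apply abs_sin_le.
  pose proof PI_RGT_0. pose proof (pos_INR N).
  rewrite !Rabs_mult, (Rabs_pos_eq PI), (Rabs_pos_eq (INR N)) by lra.
  unfold Rdiv. replace (2 * PI * INR N * / IZR (cf_q theta (S (k n)))) with
    (2 * (PI * INR N * / IZR (cf_q theta (S (k n))))) by ring.
  apply Rmult_le_compat_l; [lra|]. apply Rmult_le_compat_l; [nra|]. auto.
Qed.

Lemma cc_lower n : exists N, 1 <= Cmod (cc N n).
Proof.
  set (x := IZR (Qz n) * theta).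
  set (a := Int_part x). set (f := x - IZR a).
  assert (Hf : f <> 0) by (apply (Int_not_int theta Hirr), Qz_pos).
  assert (Hf01 : 0 <= f < 1) by (destruct (base_Int_part x); unfold f, a; lra).
  assert (Hg : exists g (m : Z) (sg : R), 0 < g <= 1/2 /\ (sg = 1 \/ sg = -1) /\ x = IZR m + sg * g).
  { destruct (Rle_lt_dec f (1/2)).
    - exists f, a, 1. split; [lra|]. split; auto. unfold f. ring.
    - exists (1 - f), (a + 1)%Z, (-1). split; [lra|]. split; auto. rewrite plus_IZR. unfold f. ring. }
  destruct Hg as (g & m & sg & Hg & Hsg & Hx).
  set (Nz := up (1 / (6 * g))). destruct (archimed (1 / (6 * g))) as [H1 H2].
  assert (Hpos : 0 < 1 / (6 * g)) by (apply Rdiv_lt_0_compat; lra).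
  assert (HNz : (0 <= Nz)%Z) by (apply le_IZR; fold Nz in H1; lra).
  exists (Z.to_nat Nz). unfold cc. rewrite Cmod_1_expi.
  rewrite INR_IZR_INZ, Z2Nat.id by auto. fold (Qz n).
  replace (2 * PI * IZR (Qz n) * (IZR Nz * theta) / 2) with (PI * (IZR Nz * x)) by (unfold x; field).
  rewrite Hx.
  replace (PI * (IZR Nz * (IZR m + sg * g))) with (sg * (PI * (IZR Nz * g)) + IZR (Nz * m) * PI)
    by (rewrite mult_IZR; ring).
  rewrite abs_sin_periodZ.
  assert (1/2 <= Rabs (sin (PI * (IZR Nz * g)))).
  { apply sin_mid. fold Nz in H1, H2.
    assert (1/6 < IZR Nz * g). { apply Rmult_lt_reg_r with (/g). apply Rinv_0_lt_compat; lra.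
      replace (IZR Nz * g * / g) with (IZR Nz) by (field; lra). 
      replace (1 / 6 * / g) with (1 / (6 * g)) by (field; lra). lra. }
    assert (IZR Nz * g <= (1 / (6 * g) + 1) * g) by (apply Rmult_le_compat_r; lra).
    replace ((1 / (6 * g) + 1) * g) with (1/6 + g) in H0 by (field; lra). lra. }
  destruct Hsg; subst sg.
  - rewrite Rmult_1_l. lra.
  - replace (-1 * (PI * (IZR Nz * g))) with (- (PI * (IZR Nz * g))) by ring.
    rewrite sin_neg, Rabs_Ropp. lra.
Qed.

Lemma growth (A rho : R) : 1 <= rho -> exists n1, forall n, (n1 <= n)%nat ->
  A * rho ^ (Qn n) <= IZR (cf_q theta (S (k n))).
Proof.
  intros Hr. set (s := Rmax A 1 * rho).
  assert (Hs : 1 <= s) by (unfold s; pose proof (Rmax_r A 1); nra).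
  destruct (Hgrowth (ln s)) as [N HN]. exists N. intros n Hn.
  specialize (HN (k n) ltac:(pose proof (k_ge n); lia)). simpl in HN.
  fold (Qz n) in HN. rewrite <- INR_Qn in HN.
  pose proof (Qn_ge n). pose proof (Qz_pos n). 
  assert (HQ : 1 <= INR (Qn n)) by (rewrite INR_Qn; apply IZR_le in H0; auto).
  pose proof (cf_q_pos theta Hirr (S (k n))) as Hq. apply IZR_le in Hq.
  assert (E1 : ln (s ^ Qn n) < ln (IZR (cf_q theta (S (k n))))).
  { rewrite ln_pow by lra. apply Rmult_lt_reg_r with (/ INR (Qn n)). apply Rinv_0_lt_compat; lra.
    replace (INR (Qn n) * ln s * / INR (Qn n)) with (ln s) by (field; lra). auto. }
  apply ln_lt_inv in E1; [|apply pow_lt; lra|lra].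
  apply Rle_trans with (s ^ Qn n); [|lra].
  unfold s. rewrite Rpow_mult_distr.
  assert (A <= Rmax A 1 ^ Qn n).
  { assert (1 <= Qn n)%nat by (unfold Qn; lia).
    pose proof (Rle_pow (Rmax A 1) 1 (Qn n) (Rmax_r A 1) H1). simpl in H2. pose proof (Rmax_l A 1). lra. }
  assert (0 < rho ^ Qn n) by (apply pow_lt; lra).
  destruct (Rle_lt_dec A 0). { assert (0 < Rmax A 1 ^ Qn n) by (apply pow_lt; pose proof (Rmax_r A 1); lra). nra. }
  apply Rmult_le_compat_r; lra.
Qed.

Lemma half_pow n : (1/2)^n * 2^n = 1.
Proof. rewrite <- Rpow_mult_distr. replace (1/2*2) with 1 by field. apply pow1. Qed.

Lemma Rpsum_nonneg (g : nat -> R) n : (forall j, 0 <= g j) -> 0 <= Rpsum g n.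
Proof. intros Hg. induction n; simpl; [lra|specialize (Hg n); lra]. Qed.

Lemma Rpsum_term (g : nat -> R) i n : (forall j, 0 <= g j) -> (i < n)%nat -> g i <= Rpsum g n.
Proof.
  intros Hg H. induction H; simpl.
  - pose proof (Rpsum_nonneg g i Hg). lra.
  - specialize (Hg m). lra.
Qed.

Lemma dom rho N : 1 <= rho -> exists K, forall n, Cmod (cc N n) * rho ^ (Qn n) <= K * (1/2)^n.
Proof.
  intros Hr. destruct (growth 1 (2 * rho) ltac:(lra)) as [n1 Hn1].
  set (g := fun i => 2 * rho ^ (Qn i) * 2 ^ i).
  assert (Hg : forall j, 0 <= g j).
  { intros j. unfold g. assert (0 < rho ^ Qn j) by (apply pow_lt; lra).
    assert (0 < 2 ^ j) by (apply pow_lt; lra). nra. }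
  exists (2 * PI * INR N + Rpsum g n1). intros n.
  pose proof (Cmod_ge_0 (cc N n)). pose proof PI_RGT_0. pose proof (pos_INR N).
  assert (0 < rho ^ Qn n) by (apply pow_lt; lra).
  pose proof (Rpsum_nonneg g n1 Hg).
  assert (0 < (1/2)^n) by (apply pow_lt; lra).
  assert (0 < 2^n) by (apply pow_lt; lra).
  pose proof (half_pow n) as Hh.
  pose proof (cc_le2 N n) as Hc.
  pose proof (cc_upper N n) as Hu.
  destruct (le_lt_dec n1 n) as [Hle|Hlt].
  - specialize (Hn1 n Hle). rewrite Rmult_1_l, Rpow_mult_distr in Hn1.
    assert (H7 : 2 ^ n <= 2 ^ Qn n) by (apply Rle_pow; [lra| apply Qn_ge]).
    assert (0 < 2 ^ Qn n) by (apply pow_lt; lra).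
    set (q := IZR (cf_q theta (S (k n)))) in *.
    set (P := rho ^ Qn n) in *. set (T := (1/2)^n) in *. set (U := 2 ^ n) in *.
    set (V := 2 ^ Qn n) in *. set (C := Cmod (cc N n)) in *.
    assert (Hq : U * P <= q) by nra.
    assert (0 < q) by nra.
    assert (Hc2 : C * q <= 2 * PI * INR N).
    { apply Rmult_le_reg_r with (/ q). apply Rinv_0_lt_compat; lra.
      rewrite Rmult_assoc, Rinv_r by lra. unfold Rdiv in Hu. lra. }
    assert (C * (U * P) <= 2 * PI * INR N) by nra.
    assert (C * P * U <= 2 * PI * INR N * T * U).
    { replace (2 * PI * INR N * T * U) with (2 * PI * INR N * (T * U)) by ring. rewrite Hh. nra. }
    assert (C * P <= 2 * PI * INR N * T) by (apply Rmult_le_reg_r with U; lra).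
    nra.
  - assert (Ht : 2 * rho ^ Qn n * 2 ^ n <= Rpsum g n1) by exact (Rpsum_term g n n1 Hg Hlt).
    set (P := rho ^ Qn n) in *. set (T := (1/2)^n) in *. set (U := 2 ^ n) in *.
    set (C := Cmod (cc N n)) in *. set (Sg := Rpsum g n1) in *.
    assert (H7 : C * P <= 2 * P * U * T).
    { replace (2 * P * U * T) with (2 * P * (T * U)) by ring. rewrite Hh. nra. }
    clear Hu Hn1. eapply Rle_trans; [apply H7|]. apply Rmult_le_compat_r; [lra|]. assert (0 <= PI * INR N) by (apply Rmult_le_pos; lra). lra.
Qed.

Lemma Cmod_expi t : Cmod (Cexpi t) = 1.
Proof. unfold Cexpi. change (sqrt (cos t ^ 2 + sin t ^ 2) = 1).
  rewrite <- !Rsqr_pow2, Rplus_comm, sin2_cos2. apply sqrt_1. Qed.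

Lemma Cmod_RtoC x : Cmod (RtoC x) = Rabs x.
Proof. apply Cmod_R. Qed.

Lemma poly_err (w z : C) (Rb : R) m : 1 <= Rb -> Cmod w <= Rb -> Cmod z <= Rb ->
  Cmod (w ^ (S m) - z ^ (S m) - RtoC (INR (S m)) * z ^ m * (w - z))%C <= INR m ^ 2 * Rb ^ m * Cmod (w - z)%C ^ 2.
Proof.
  intros HR Hw Hz. induction m.
  - simpl. replace (w * 1 - z * 1 - RtoC 1 * 1 * (w - z))%C with (RtoC 0) by (apply injective_projections; simpl; ring).
    rewrite Cmod_0. lra.
  - replace (w ^ S (S m) - z ^ S (S m) - RtoC (INR (S (S m))) * z ^ S m * (w - z))%C with
      (w * (w ^ (S m) - z ^ (S m) - RtoC (INR (S m)) * z ^ m * (w - z)) + RtoC (INR (S m)) * z ^ m * ((w - z) * (w - z)))%C.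
    2:{ rewrite !S_INR. simpl. 
        apply injective_projections; simpl; ring. }
    eapply Rle_trans. apply Cmod_triangle. rewrite !Cmod_mult, Cmod_RtoC, Cmod_pow, Rabs_pos_eq by apply pos_INR.
    set (E := Cmod (w ^ S m - z ^ S m - RtoC (INR (S m)) * z ^ m * (w - z))%C) in *.
    assert (0 <= E) by apply Cmod_ge_0.
    set (h := Cmod (w - z)%C) in *. pose proof (Cmod_ge_0 (w - z)%C). fold h in H0.
    pose proof (Cmod_ge_0 w). pose proof (Cmod_ge_0 z).
    assert (Hzm : Cmod z ^ m <= Rb ^ m) by (apply pow_incr; lra).
    assert (0 <= Rb ^ m) by (apply pow_le; lra).
    pose proof (pos_INR m).
    change (Rb ^ S m) with (Rb * Rb ^ m). rewrite S_INR.
    set (A := Rb ^ m) in *. set (Zm := Cmod z ^ m) in *. set (x := INR m) in *.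
    set (W := Cmod w) in *.
    assert (W * E <= Rb * (x ^ 2 * A * h ^ 2)).
    { apply Rmult_le_compat; try lra. }
    assert ((x + 1) * Zm * (h * h) <= (x + 1) * A * (h * h)).
    { apply Rmult_le_compat_r. nra. apply Rmult_le_compat_l; lra. }
    assert ((x+1) * A * (h*h) <= (x+1) * (Rb * A) * (h*h)).
    { apply Rmult_le_compat_r. nra. apply Rmult_le_compat_l. lra. nra. }
    assert (Rb * (x ^ 2 * A * h ^ 2) + (x + 1) * (Rb * A) * (h * h) <= (x + 1) ^ 2 * (Rb * A) * h ^ 2).
    { assert (0 <= Rb * A * (h*h)) by (apply Rmult_le_pos; nra).
      replace ((x + 1) ^ 2 * (Rb * A) * h ^ 2) with (Rb * (x ^ 2 * A * h ^ 2) + (2*x+1) * (Rb * A * (h*h))) by ring.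
      replace ((x + 1) * (Rb * A) * (h * h)) with ((x+1) * (Rb * A * (h*h))) by ring. nra. }
    replace (Cmod (w - z)%C * Cmod (w - z)%C) with (h * h) by reflexivity.
    lra.
Qed.

Lemma pow_facts Q : INR (S Q) <= 2 ^ Q /\ INR Q ^ 2 <= 4 ^ Q.
Proof.
  induction Q. simpl. lra.
  destruct IHQ as [H1 H2]. assert (1 <= 4 ^ Q) by (apply pow_R1_Rle; lra).
  assert (1 <= 2 ^ Q) by (apply pow_R1_Rle; lra).
  rewrite !S_INR in *. change (2 ^ S Q) with (2 * 2 ^ Q). change (4 ^ S Q) with (4 * 4 ^ Q).
  pose proof (pos_INR Q). set (x := INR Q) in *. set (a := 2 ^ Q) in *. set (b := 4 ^ Q) in *.
  split; nra.
Qed.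

Variable z : Cx.
Hypothesis Hz : 1 < Cmod z.

Definition bq (u : nat -> Cx) N n : C := (u (Qn n) * cc N n)%C.
Definition tm (u : nat -> Cx) N (w : C) n : C := (bq u N n * w ^ (Qn n))%C.
Definition dt (u : nat -> Cx) N n : C := (bq u N n * (RtoC (INR (S (Qn n))) * z ^ (Qn n)))%C.
Definition Dv (u : nat -> Cx) N : C := (Cexpi (2 * PI * (INR N * theta)) * Csum (dt u N))%C.

Definition Rb := Cmod z + 1.

Lemma bq_bound u N B K : (forall m, Cmod (u m) <= B) ->
  (forall n, Cmod (cc N n) * (4 * Rb) ^ (Qn n) <= K * (1/2)^n) ->
  forall n, Cmod (bq u N n) * (4 * Rb) ^ (Qn n) <= B * K * (1/2)^n.
Proof.
  intros HB HK n. unfold bq. rewrite Cmod_mult. specialize (HB (Qn n)). specialize (HK n).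
  pose proof (Cmod_ge_0 (u (Qn n))). pose proof (Cmod_ge_0 (cc N n)).
  assert (0 <= (4 * Rb) ^ Qn n) by (apply pow_le; unfold Rb; pose proof (Cmod_ge_0 z); lra).
  set (P := (4 * Rb) ^ Qn n) in *. set (c := Cmod (cc N n)) in *. set (a := Cmod (u (Qn n))) in *.
  set (T := (1/2)^n) in *.
  replace (a * c * P) with (a * (c * P)) by ring. replace (B * K * T) with (B * (K * T)) by ring.
  apply Rmult_le_compat; try lra. apply Rmult_le_pos; auto.
Qed.

Lemma Rb_ge : 1 <= Rb.
Proof. unfold Rb. pose proof (Cmod_ge_0 z). lra. Qed.

Lemma pow_4Rb (w : C) Q : Cmod w <= Rb -> Cmod w ^ Q <= (4 * Rb) ^ Q.
Proof. intros H. apply pow_incr. pose proof (Cmod_ge_0 w). pose proof Rb_ge. lra. Qed.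

Lemma tm_bound u N B K w : (forall n, Cmod (bq u N n) * (4 * Rb) ^ (Qn n) <= B * K * (1/2)^n) ->
  Cmod w <= Rb -> forall n, Cmod (tm u N w n) <= B * K * (1/2)^n.
Proof.
  intros Hb Hw n. unfold tm. rewrite Cmod_mult, Cmod_pow. eapply Rle_trans; [|apply Hb].
  apply Rmult_le_compat_l. apply Cmod_ge_0. apply pow_4Rb; auto.
Qed.

Lemma dt_bound u N B K : (forall n, Cmod (bq u N n) * (4 * Rb) ^ (Qn n) <= B * K * (1/2)^n) ->
  forall n, Cmod (dt u N n) <= B * K * (1/2)^n.
Proof.
  intros Hb n. unfold dt. rewrite !Cmod_mult, Cmod_pow, Cmod_RtoC, Rabs_pos_eq by apply pos_INR.
  eapply Rle_trans; [|apply Hb]. apply Rmult_le_compat_l. apply Cmod_ge_0.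
  destruct (pow_facts (Qn n)) as [H1 _].
  assert (Cmod z ^ Qn n <= Rb ^ Qn n) by (apply pow_incr; pose proof (Cmod_ge_0 z); unfold Rb; lra).
  assert (0 <= Cmod z ^ Qn n) by (apply pow_le, Cmod_ge_0).
  rewrite Rpow_mult_distr. replace 4 with (2*2) by ring. rewrite Rpow_mult_distr.
  assert (1 <= 2 ^ Qn n) by (apply pow_R1_Rle; lra).
  assert (0 <= Rb ^ Qn n) by (apply pow_le; pose proof Rb_ge; lra).
  set (a := 2 ^ Qn n) in *. set (b := Cmod z ^ Qn n) in *. set (c := Rb ^ Qn n) in *.
  assert (INR (S (Qn n)) * b <= a * c) by (apply Rmult_le_compat; try lra; apply pos_INR).
  set (d := INR (S (Qn n))) in *. assert (a * c <= a * a * c) by (assert (0 <= (a - 1) * (a * c)) by (apply Rmult_le_pos; nra); nra). lra.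
Qed.

Lemma bq_err u N B K n (w : C) : (forall n, Cmod (bq u N n) * (4 * Rb) ^ (Qn n) <= B * K * (1/2)^n) ->
  Cmod w <= Rb ->
  Cmod (w * tm u N w n + -1 * (z * tm u N z n) + - (w - z) * dt u N n)%C
    <= B * K * Cmod (w - z)%C ^ 2 * (1/2)^n.
Proof.
  intros Hb Hw.
  replace (w * tm u N w n + -1 * (z * tm u N z n) + - (w - z) * dt u N n)%C with
    (bq u N n * (w ^ (S (Qn n)) - z ^ (S (Qn n)) - RtoC (INR (S (Qn n))) * z ^ (Qn n) * (w - z)))%C
    by (unfold tm, dt; simpl; ring).
  rewrite Cmod_mult. pose proof Rb_ge.
  assert (Hz' : Cmod z <= Rb) by (unfold Rb; lra).
  pose proof (poly_err w z Rb (Qn n) H Hw Hz').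
  destruct (pow_facts (Qn n)) as [_ H2].
  specialize (Hb n).
  pose proof (Cmod_ge_0 (bq u N n)). pose proof (Cmod_ge_0 (w - z)%C).
  assert (0 <= Rb ^ Qn n) by (apply pow_le; lra).
  assert (INR (Qn n) ^ 2 * Rb ^ Qn n <= (4 * Rb) ^ Qn n).
  { rewrite Rpow_mult_distr. apply Rmult_le_compat_r; lra. }
  set (E := Cmod (w ^ S (Qn n) - z ^ S (Qn n) - RtoC (INR (S (Qn n))) * z ^ Qn n * (w - z))%C) in *.
  set (h := Cmod (w - z)%C) in *. set (bb := Cmod (bq u N n)) in *.
  set (P := (4 * Rb) ^ Qn n) in *. set (T := (1/2)^n) in *.
  set (X := INR (Qn n) ^ 2 * Rb ^ Qn n) in *.
  assert (0 <= h ^ 2) by (apply pow_le; lra).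
  assert (E <= P * h ^ 2). { eapply Rle_trans. apply H0. apply Rmult_le_compat_r; lra. }
  apply Rle_trans with (bb * (P * h ^ 2)). apply Rmult_le_compat_l; lra.
  replace (B * K * h ^ 2 * T) with ((B * K * T) * h ^ 2) by ring.
  replace (bb * (P * h ^ 2)) with ((bb * P) * h ^ 2) by ring.
  apply Rmult_le_compat_r; lra.
Qed.

Lemma deriv u N B : (forall m, Cmod (u m) <= B) ->
  has_cderiv (phi (INR N * theta) (fun n => cf_q theta (k n)) u) z (Dv u N).
Proof.
  intros HB. destruct (dom (4 * Rb) N) as [K HK]. { pose proof Rb_ge. lra. }
  pose proof (bq_bound u N B K HB HK) as Hb.
  assert (HBK : 0 <= B * K).
  { specialize (Hb 0%nat). simpl in Hb. pose proof (Cmod_ge_0 (bq u N 0)).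
    assert (0 <= (4 * Rb) ^ Qn 0) by (apply pow_le; pose proof Rb_ge; lra). nra. }
  intros eps Heps.
  set (delta := Rmin 1 (eps / (2 * (B * K) + 1))).
  assert (Hd1 : delta <= 1) by apply Rmin_l.
  assert (Hd2 : delta <= eps / (2 * (B * K) + 1)) by apply Rmin_r.
  assert (Hdp : 0 < delta) by (apply Rmin_pos; [lra| apply Rdiv_lt_0_compat; lra]).
  exists delta. split; auto. intros w Hwz.
  change (Cmod (w - z)%C < delta) in Hwz.
  assert (Hw : Cmod w <= Rb).
  { unfold Rb. replace w with ((w - z) + z)%C by ring. eapply Rle_trans. apply Cmod_triangle. lra. }
  assert (Hz' : Cmod z <= Rb) by (unfold Rb; lra).
  set (E := Cexpi (2 * PI * (INR N * theta))).
  change (Cmod ((w * E) * Csum (tm u N w) - (z * E) * Csum (tm u N z) - (E * Csum (dt u N)) * (w - z))%C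
     <= eps * Cmod (w - z)%C).
  destruct (dom_sum (tm u N w) (B * K) (tm_bound u N B K w Hb Hw)) as [Cw _].
  destruct (dom_sum (tm u N z) (B * K) (tm_bound u N B K z Hb Hz')) as [Cz _].
  destruct (dom_sum (dt u N) (B * K) (dt_bound u N B K Hb)) as [Cd _].
  pose proof (conv_add _ _ _ _ (conv_add _ _ _ _ (conv_scal w _ _ Cw) (conv_scal (-1) _ _ (conv_scal z _ _ Cz)))
     (conv_scal (- (w - z)) _ _ Cd)) as Ctot.
  simpl in Ctot.
  set (Tot := (w * Csum (tm u N w) + -1 * (z * Csum (tm u N z)) + - (w - z) * Csum (dt u N))%C) in *.
  replace ((w * E) * Csum (tm u N w) - (z * E) * Csum (tm u N z) - (E * Csum (dt u N)) * (w - z))%C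
    with (E * Tot)%C by (unfold Tot; ring).
  rewrite Cmod_mult. unfold E. rewrite Cmod_expi, Rmult_1_l.
  set (h := Cmod (w - z)%C) in *. pose proof (Cmod_ge_0 (w - z)%C). fold h in H.
  assert (HT : Cmod Tot <= 2 * (B * K * h ^ 2)).
  { apply (conv_bound _ _ _ Ctot). intros n.
    eapply Rle_trans. apply Cpartial_bound. intros i. apply (bq_err u N B K i w Hb Hw).
    apply Rpsum_geom. apply Rmult_le_pos; [lra| apply pow_le; lra]. }
  assert (2 * (B * K) * h <= eps).
  { apply Rle_trans with (2 * (B * K) * (eps / (2 * (B * K) + 1))).
    apply Rmult_le_compat_l; lra.
    apply Rmult_le_reg_r with (2 * (B * K) + 1). lra.
    replace (2 * (B * K) * (eps / (2 * (B * K) + 1)) * (2 * (B * K) + 1)) with (2 * (B * K) * eps) by (field; lra).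
    nra. }
  replace (2 * (B * K * h ^ 2)) with ((2 * (B * K) * h) * h) in HT by ring.
  eapply Rle_trans; [apply HT|]. apply Rmult_le_compat_r; lra.
Qed.

Lemma conv_ext a b l : (forall n, a n = b n) -> Cseries_conv a l -> Cseries_conv b l.
Proof.
  intros H. assert (a = b) by (apply functional_extensionality; auto). now subst.
Qed.

Lemma Dv_lin u v (c : C) N Bu Bv : (forall m, Cmod (u m) <= Bu) -> (forall m, Cmod (v m) <= Bv) ->
  Dv (fun m => u m + c * v m)%C N = (Dv u N + c * Dv v N)%C.
Proof.
  intros Hu Hv. destruct (dom (4 * Rb) N) as [K HK]. { pose proof Rb_ge. lra. }
  destruct (dom_sum _ _ (dt_bound u N Bu K (bq_bound u N Bu K Hu HK))) as [Cu _].
  destruct (dom_sum _ _ (dt_bound v N Bv K (bq_bound v N Bv K Hv HK))) as [Cv _].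
  pose proof (conv_add _ _ _ _ Cu (conv_scal c _ _ Cv)) as C2.
  assert (C3 : Cseries_conv (dt (fun m => u m + c * v m)%C N) (Csum (dt u N) + c * Csum (dt v N))%C).
  { eapply conv_ext; [|exact C2]. intros n. cbv beta. unfold dt, bq. assert (Hr : forall a b c0 d e : C, (a*d*e + c0*(b*d*e) = (a + c0*b)*d*e)%C) by (intros; ring). apply Hr. }
  unfold Dv. rewrite (Csum_spec _ _ C3). ring.
Qed.

Lemma Dv_bound N : exists L, 0 <= L /\ forall u B, (forall m, Cmod (u m) <= B) -> Cmod (Dv u N) <= B * L.
Proof.
  destruct (dom (4 * Rb) N) as [K HK]. { pose proof Rb_ge. lra. }
  assert (HK0 : 0 <= K).
  { specialize (HK 0%nat). simpl in HK. pose proof (Cmod_ge_0 (cc N 0)).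
    assert (0 <= (4 * Rb) ^ Qn 0) by (apply pow_le; pose proof Rb_ge; lra). nra. }
  exists (2 * K). split; [lra|]. intros u B Hu.
  destruct (dom_sum _ _ (dt_bound u N B K (bq_bound u N B K Hu HK))) as [_ Hs].
  unfold Dv. rewrite Cmod_mult, Cmod_expi. lra.
Qed.

Definition gZ i := 2 * INR (S (Qn i)) * Cmod z ^ (Qn i).
Definition FF p := Rpsum gZ (S p).

Definition Pstep p Nm n N := (p < n)%nat /\ FF p + INR p + 3 <= INR (S (Qn n)) * Cmod z ^ Qn n /\
   2 * PI * INR Nm * (INR (S (Qn n)) * Cmod z ^ Qn n) * 2 ^ (S n) <= IZR (cf_q theta (S (k n))) /\
   1 <= Cmod (cc N n).

Lemma up_nat (x : R) : x < INR (Z.to_nat (up x)).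
Proof.
  destruct (archimed x) as [H1 _].
  destruct (Z_le_gt_dec 0 (up x)). rewrite INR_IZR_INZ, Z2Nat.id by auto. lra.
  pose proof (pos_INR (Z.to_nat (up x))). assert (IZR (up x) < 0) by (apply IZR_lt; lia). lra.
Qed.

Lemma step_ex p Nm : exists nN : nat * nat, Pstep p Nm (fst nN) (snd nN).
Proof.
  destruct (growth (4 * PI * INR Nm + 1) (4 * Cmod z)) as [n1 Hn1]. lra.
  set (n0 := Z.to_nat (up (FF p + INR p + 3))).
  set (n := Nat.max n1 (Nat.max (S p) n0)).
  destruct (cc_lower n) as [N HN].
  exists (n, N). simpl. unfold Pstep. split; [|split; [|split]]; auto.
  - unfold n. lia.
  - pose proof (up_nat (FF p + INR p + 3)). fold n0 in H.
    assert (INR n0 <= INR (S (Qn n))). { apply le_INR. pose proof (Qn_ge n). unfold n in *. lia. }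
    assert (1 <= Cmod z ^ Qn n) by (apply pow_R1_Rle; lra).
    pose proof (pos_INR (S (Qn n))). nra.
  - specialize (Hn1 n ltac:(unfold n; lia)).
    destruct (pow_facts (Qn n)) as [H1 _].
    assert (2 ^ n <= 2 ^ Qn n) by (apply Rle_pow; [lra|apply Qn_ge]).
    assert (0 <= Cmod z ^ Qn n) by (apply pow_le, Cmod_ge_0).
    assert (1 <= 2 ^ n) by (apply pow_R1_Rle; lra).
    rewrite !Rpow_mult_distr in Hn1. replace 4 with (2*2) in Hn1 at 2 by ring. rewrite Rpow_mult_distr in Hn1.
    pose proof PI_RGT_0. pose proof (pos_INR Nm).
    change (2 ^ S n) with (2 * 2 ^ n).
    set (a := 2 ^ Qn n) in *. set (b := Cmod z ^ Qn n) in *. set (c := 2 ^ n) in *.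
    set (d := INR (S (Qn n))) in *. set (e := PI * INR Nm) in *.
    assert (0 <= e) by (unfold e; nra).
    assert (d * b <= a * b) by (apply Rmult_le_compat_r; lra).
    assert (d * b * c <= a * b * a).
    { apply Rmult_le_compat; try lra. apply Rmult_le_pos; [unfold d; apply pos_INR | lra]. }
    assert (0 <= a * b * a) by (apply Rmult_le_pos; [apply Rmult_le_pos|]; lra).
    replace (2 * PI * INR Nm * (d * b) * (2 * c)) with (4 * e * (d * b * c)) by (unfold e; ring).
    replace ((4 * PI * INR Nm + 1) * (a * a * b)) with (4 * e * (a * b * a) + a * b * a) in Hn1 by (unfold e; ring).
    assert (4 * e * (d * b * c) <= 4 * e * (a * b * a)) by (apply Rmult_le_compat_l; lra).
    lra.
Qed.

Definition pick p Nm : nat * nat := proj1_sig (constructive_indefinite_description _ (step_ex p Nm)).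
Lemma pick_spec p Nm : Pstep p Nm (fst (pick p Nm)) (snd (pick p Nm)).
Proof. unfold pick. destruct (constructive_indefinite_description _ _). auto. Qed.

Fixpoint st (j : nat) : nat * nat :=
  match j with
  | O => (1%nat, 0%nat)
  | S j => (fst (pick (fst (st j)) (snd (st j))), Nat.max (snd (st j)) (snd (pick (fst (st j)) (snd (st j)))))
  end.
Definition pj j := fst (st j).
Definition Nmj j := snd (st j).
Definition nj j := fst (pick (pj j) (Nmj j)).
Definition Nj j := snd (pick (pj j) (Nmj j)).
Lemma pj_S j : pj (S j) = nj j. Proof. reflexivity. Qed.
Lemma Nmj_S j : Nmj (S j) = Nat.max (Nmj j) (Nj j). Proof. reflexivity. Qed.
Lemma spec j : Pstep (pj j) (Nmj j) (nj j) (Nj j).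
Proof. apply pick_spec. Qed.
Lemma pj_lt j : (pj j < nj j)%nat.
Proof. destruct (spec j) as [H _]. auto. Qed.
Lemma pj_ge j : (S j <= pj j)%nat.
Proof. induction j. unfold pj. simpl. lia. rewrite pj_S. pose proof (pj_lt j). lia. Qed.
Lemma nj_le_pj i j : (i < j)%nat -> (nj i <= pj j)%nat.
Proof.
  intros H. induction H. rewrite pj_S. lia.
  rewrite pj_S. pose proof (pj_lt m). lia.
Qed.
Lemma Nj_le i j : (i < j)%nat -> (Nj i <= Nmj j)%nat.
Proof.
  intros H. induction H. rewrite Nmj_S. lia. rewrite Nmj_S. lia.
Qed.

Definition wh (m : nat) : Cx :=
  if excluded_middle_informative (exists j, m = Qn (nj j)) then C1 else C0.

Lemma wh_bound m : Cmod (wh m) <= 1.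
Proof. unfold wh. destruct (excluded_middle_informative _).
  - change (Cmod (RtoC 1) <= 1). rewrite Cmod_1. lra.
  - change (Cmod (RtoC 0) <= 1). rewrite Cmod_0. lra.
Qed.
Lemma wh_chosen j : wh (Qn (nj j)) = C1.
Proof. unfold wh. destruct (excluded_middle_informative _) as [_|H]; auto. exfalso. apply H. now exists j. Qed.
Lemma wh_not n : (forall j, n <> nj j) -> wh (Qn n) = C0.
Proof.
  intros Hn. unfold wh. destruct (excluded_middle_informative _) as [[j Hj]|_]; auto.
  exfalso. apply (Hn j). apply Qn_inj; auto. pose proof (pj_lt j). pose proof (pj_ge j). lia.
Qed.

Lemma ind_conv (x : C) n0 : Cseries_conv (fun n => if Nat.eq_dec n n0 then x else RtoC 0) x.
Proof.
  assert (Hp : forall P, (n0 < P)%nat -> Cpartial (fun n => if Nat.eq_dec n n0 then x else RtoC 0) P = x).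
  { intros P HP. induction HP.
    - simpl. assert (Cpartial (fun n => if Nat.eq_dec n n0 then x else RtoC 0) n0 = RtoC 0).
      { clear. assert (forall P, (P <= n0)%nat -> Cpartial (fun n => if Nat.eq_dec n n0 then x else RtoC 0) P = RtoC 0).
        { induction P; intros H. reflexivity. simpl. rewrite IHP by lia.
          destruct (Nat.eq_dec P n0); [lia|]. apply injective_projections; simpl; ring. }
        apply H. lia. }
      rewrite H. destruct (Nat.eq_dec n0 n0); [|lia]. apply injective_projections; simpl; ring.
    - simpl. rewrite IHHP. destruct (Nat.eq_dec m n0); [lia|]. apply injective_projections; simpl; ring. }
  intros eps Heps. exists (S n0). intros n Hn. rewrite Hp by lia.
  change (Cmod (x - x)%C < eps). replace (x - x)%C with (RtoC 0) by (apply injective_projections; simpl; ring).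
  rewrite Cmod_0. lra.
Qed.

Lemma Rpsum_plus f g P : Rpsum (fun n => f n + g n) P = Rpsum f P + Rpsum g P.
Proof. induction P; simpl; [lra|]. rewrite IHP. ring. Qed.

Lemma Rpsum_mono g a b : (forall j, 0 <= g j) -> (a <= b)%nat -> Rpsum g a <= Rpsum g b.
Proof. intros Hg H. induction H. lra. simpl. specialize (Hg m). lra. Qed.

Lemma Rpsum_trunc g p P : (forall j, 0 <= g j) ->
  Rpsum (fun n => if le_lt_dec n p then g n else 0) P <= Rpsum g (S p).
Proof.
  intros Hg. assert (forall P, Rpsum (fun n => if le_lt_dec n p then g n else 0) P = Rpsum g (Nat.min P (S p))).
  { induction P0. reflexivity.
    change (Rpsum (fun n => if le_lt_dec n p then g n else 0) (S P0)) with
      (Rpsum (fun n => if le_lt_dec n p then g n else 0) P0 + (if le_lt_dec P0 p then g P0 else 0)).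
    rewrite IHP0. destruct (le_lt_dec P0 p).
    - replace (Nat.min (S P0) (S p)) with (S P0) by lia.
      replace (Nat.min P0 (S p)) with P0 by lia. reflexivity.
    - replace (Nat.min (S P0) (S p)) with (Nat.min P0 (S p)) by lia. ring. }
  rewrite H. apply Rpsum_mono; auto. lia.
Qed.

Lemma gZ_nonneg j : 0 <= gZ j.
Proof. unfold gZ. pose proof (pos_INR (S (Qn j))). assert (0 <= Cmod z ^ Qn j) by (apply pow_le, Cmod_ge_0). nra. Qed.

Lemma hump_j j : INR j + 2 <= Cmod (Dv wh (Nj j)).
Proof.
  set (N := Nj j). set (n0 := nj j). set (p := pj j).
  set (a := dt wh N).
  set (rest := fun n => if Nat.eq_dec n n0 then RtoC 0 else a n).
  set (h := fun n => (if le_lt_dec n p then gZ n else 0) + (1/2)^(S n)).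
  destruct (dom (4 * Rb) N) as [K HK]. { pose proof Rb_ge. lra. }
  pose proof (bq_bound wh N 1 K wh_bound HK) as Hb.
  pose proof (dt_bound wh N 1 K Hb) as Hdt.
  assert (Hrd : forall n, Cmod (rest n) <= 1 * K * (1/2)^n).
  { intros n. unfold rest. destruct (Nat.eq_dec n n0). rewrite Cmod_0.
    specialize (Hdt n). pose proof (Cmod_ge_0 (dt wh N n)). lra. apply Hdt. }
  destruct (dom_sum rest _ Hrd) as [Crest _].
  assert (Ca : Cseries_conv a (Csum rest + a n0)%C).
  { eapply conv_ext; [|exact (conv_add _ _ _ _ Crest (ind_conv (a n0) n0))].
    intros n. unfold rest. simpl. destruct (Nat.eq_dec n n0).
    - subst. apply injective_projections; simpl; ring.
    - apply injective_projections; simpl; ring. }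
  assert (Ha : forall n, Cmod (a n) <= Cmod (wh (Qn n)) * Cmod (cc N n) * (INR (S (Qn n)) * Cmod z ^ Qn n)).
  { intros n. unfold a, dt, bq. rewrite !Cmod_mult, Cmod_RtoC, Cmod_pow, Rabs_pos_eq by apply pos_INR. lra. }
  assert (Hh : forall n, Cmod (rest n) <= h n).
  { intros n. unfold rest, h.
    assert (0 <= (1/2)^(S n)) by (apply pow_le; lra).
    assert (0 <= INR (S (Qn n)) * Cmod z ^ Qn n).
    { apply Rmult_le_pos. apply pos_INR. apply pow_le, Cmod_ge_0. }
    destruct (Nat.eq_dec n n0).
    { rewrite Cmod_0. destruct (le_lt_dec n p); [pose proof (gZ_nonneg n)|]; lra. }
    destruct (le_lt_dec n p).
    - eapply Rle_trans. apply Ha. pose proof (wh_bound (Qn n)). pose proof (cc_le2 N n).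
      pose proof (Cmod_ge_0 (wh (Qn n))). pose proof (Cmod_ge_0 (cc N n)).
      unfold gZ.
      assert (Cmod (wh (Qn n)) * Cmod (cc N n) <= 2) by nra.
      assert (Cmod (wh (Qn n)) * Cmod (cc N n) * (INR (S (Qn n)) * Cmod z ^ Qn n) <= 2 * (INR (S (Qn n)) * Cmod z ^ Qn n))
        by (apply Rmult_le_compat_r; lra).
      lra.
    - destruct (classic (exists i, n = nj i)) as [[i Hi]|Hno].
      + assert (Hij : (j < i)%nat).
        { destruct (Nat.lt_total j i) as [H1|[H1|H1]]; auto.
          - subst. exfalso. apply n1. reflexivity.
          - exfalso. pose proof (nj_le_pj i j H1). fold p in H2. lia. }
        destruct (spec i) as (_ & _ & Hg & _). rewrite <- Hi in Hg.
        pose proof (Nj_le j i Hij) as HN. fold N in HN.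
        eapply Rle_trans. apply Ha. replace (wh (Qn n)) with C1 by (rewrite Hi; symmetry; apply wh_chosen).
        change (Cmod C1) with (Cmod (RtoC 1)). rewrite Cmod_1, Rmult_1_l.
        pose proof (cc_upper N n) as Hu.
        pose proof (cf_q_pos theta Hirr (S (k n))) as Hq. apply IZR_le in Hq.
        set (q := IZR (cf_q theta (S (k n)))) in *.
        set (X := INR (S (Qn n)) * Cmod z ^ Qn n) in *.
        assert (HNN : INR N <= INR (Nmj i)) by (apply le_INR; auto).
        pose proof PI_RGT_0.
        assert (2 ^ S n * (1/2)^(S n) = 1) by (rewrite Rmult_comm; apply half_pow).
        assert (0 < 2 ^ S n) by (apply pow_lt; lra).
        assert (Cmod (cc N n) * X <= 2 * PI * INR N / q * X) by (apply Rmult_le_compat_r; lra).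
        assert (2 * PI * INR N / q * X * 2 ^ S n <= 1).
        { apply Rmult_le_reg_r with q. lra.
          replace (2 * PI * INR N / q * X * 2 ^ S n * q) with (2 * PI * INR N * X * 2 ^ S n) by (field; lra).
          rewrite Rmult_1_l. eapply Rle_trans; [|apply Hg].
          apply Rmult_le_compat_r; [lra|]. apply Rmult_le_compat_r; [lra|].
          apply Rmult_le_compat_l; lra. }
        assert (2 * PI * INR N / q * X <= (1/2)^(S n)).
        { apply Rmult_le_reg_r with (2 ^ S n). lra. rewrite Rmult_comm with (r1 := (1/2)^(S n)). lra. }
        lra.
      + eapply Rle_trans. apply Ha. rewrite wh_not. 2:{ intros j0 E. apply Hno. now exists j0. } change (Cmod C0) with (Cmod (RtoC 0)). rewrite Cmod_0. rewrite !Rmult_0_l. lra. }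
  assert (Hrest : Cmod (Csum rest) <= FF p + 1).
  { apply (conv_bound _ _ _ Crest). intros P. eapply Rle_trans. apply (Cpartial_bound _ _ Hh).
    unfold h. rewrite Rpsum_plus.
    pose proof (Rpsum_trunc gZ p P gZ_nonneg).
    assert (Rpsum (fun n => (1/2)^(S n)) P <= 1).
    { assert (Rpsum (fun n => (1/2)^(S n)) P = Rpsum (fun n => (1/2) * (1/2)^n) P) by reflexivity.
      rewrite H0. pose proof (Rpsum_geom (1/2) P ltac:(lra)). lra. }
    unfold FF. lra. }
  assert (Hn0 : FF p + INR p + 3 <= Cmod (a n0)).
  { destruct (spec j) as (_ & H1 & _ & H3). fold n0 N p in H1, H3.
    unfold a, dt, bq. rewrite !Cmod_mult, Cmod_RtoC, Cmod_pow, Rabs_pos_eq by apply pos_INR.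
    replace (wh (Qn n0)) with C1 by (symmetry; apply wh_chosen).
    change (Cmod C1) with (Cmod (RtoC 1)). rewrite Cmod_1, Rmult_1_l.
    assert (0 <= INR (S (Qn n0)) * Cmod z ^ Qn n0).
    { apply Rmult_le_pos. apply pos_INR. apply pow_le, Cmod_ge_0. }
    assert (1 * (INR (S (Qn n0)) * Cmod z ^ Qn n0) <= Cmod (cc N n0) * (INR (S (Qn n0)) * Cmod z ^ Qn n0))
      by (apply Rmult_le_compat_r; lra).
    lra. }
  unfold Dv. rewrite Cmod_mult, Cmod_expi, Rmult_1_l.
  fold a. rewrite (Csum_spec _ _ Ca).
  assert (Cmod (a n0) <= Cmod (Csum rest + a n0)%C + Cmod (Csum rest)).
  { replace (a n0) with ((Csum rest + a n0) + - Csum rest)%C at 1 by ring.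
    eapply Rle_trans. apply Cmod_triangle. rewrite Cmod_opp. lra. }
  pose proof (pj_ge j). fold p in H0. apply le_INR in H0. rewrite S_INR in H0. lra.
Qed.

Lemma hump : exists w : nat -> Cx, (forall m, Cmod (w m) <= 1) /\ forall M, exists N, M < Cmod (Dv w N).
Proof.
  exists wh. split. apply wh_bound. intros M. exists (Nj (Z.to_nat (up M))).
  pose proof (hump_j (Z.to_nat (up M))). pose proof (up_nat M). lra.
Qed.

Definition Eset (u : nat -> Cx) := bounded_seq u /\ forall j : nat, exists N, INR j < Cmod (Dv u N).
Definition Oset (j : nat) (u : nat -> Cx) := bounded_seq u /\ exists N, INR j < Cmod (Dv u N).

Lemma Oset_open j : linf_open (Oset j).
Proof.
  split. { intros u [H _]; auto. }
  intros u [[Bu Hu] [N HN]].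
  assert (Hu' : forall m, Cmod (u m) <= Bu) by exact Hu. clear Hu. rename Hu' into Hu.
  destruct (Dv_bound N) as [L [HL0 HL]].
  set (gap := Cmod (Dv u N) - INR j).
  exists (gap / (L + 1)). split. { apply Rdiv_lt_0_compat; unfold gap; lra. }
  intros v [Bv Hv] Hvu. split. { now exists Bv. }
  assert (Hv' : forall m, Cmod (v m) <= Bv) by exact Hv. clear Hv. rename Hv' into Hv.
  exists N.
  assert (Hd : forall m, Cmod (v m - u m)%C <= gap / (L + 1)) by exact Hvu.
  assert (Ev : v = (fun m => u m + RtoC 1 * (v m - u m))%C).
  { apply functional_extensionality. intros m. apply injective_projections; simpl; ring. }
  assert (Hb : forall m, Cmod (v m - u m)%C <= Bv + Bu).
  { intros m. unfold Cminus. eapply Rle_trans. apply Cmod_triangle. rewrite Cmod_opp.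
    specialize (Hu m). specialize (Hv m). lra. }
  rewrite Ev, (Dv_lin u (fun m => v m - u m)%C (RtoC 1) N Bu (Bv + Bu) Hu Hb).
  pose proof (HL _ _ Hd) as Hdv.
  assert (gap / (L + 1) * L < gap).
  { apply Rmult_lt_reg_r with (L + 1). lra.
    replace (gap / (L + 1) * L * (L + 1)) with (gap * L) by (field; lra). unfold gap in *. nra. }
  assert (Cmod (Dv u N) <= Cmod (Dv u N + RtoC 1 * Dv (fun m => (v m - u m)%C) N)%C + Cmod (Dv (fun m => (v m - u m)%C) N)).
  { replace (Dv u N) with ((Dv u N + RtoC 1 * Dv (fun m => (v m - u m)%C) N) + - Dv (fun m => (v m - u m)%C) N)%C at 1 by ring.
    eapply Rle_trans. apply Cmod_triangle. rewrite Cmod_opp. lra. }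
  unfold gap in *. lra.
Qed.

Lemma main_sec : exists E : (nat -> Cx) -> Prop,
    linf_dense E /\ linf_Gdelta E /\
    forall u, E u ->
      forall M : R, exists (N : nat) (d : Cx),
        has_cderiv (phi (INR N * theta) (fun n => cf_q theta (k n)) u) z d /\
        M < Cmod d.
Proof.
  exists Eset. split; [|split].
  - intros u [Bu Hu] eps Heps.
    assert (Hu' : forall m, Cmod (u m) <= Bu) by exact Hu. clear Hu. rename Hu' into Hu.
    destruct (classic (forall j : nat, exists N, INR j < Cmod (Dv u N))) as [Hall|Hnot].
    + exists u. split. split; auto. now exists Bu.
      intros m. change (Cmod (u m - u m)%C <= eps). replace (u m - u m)%C with (RtoC 0) by (apply injective_projections; simpl; ring).
      rewrite Cmod_0. lra.
    + apply not_all_ex_not in Hnot. destruct Hnot as [j0 Hj0].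
      assert (Hj : forall N, Cmod (Dv u N) <= INR j0).
      { intros N. apply Rnot_lt_le. intros H. apply Hj0. now exists N. }
      destruct hump as [w [Hw1 Hw2]].
      exists (fun m => u m + RtoC eps * w m)%C.
      assert (Hv : forall m, Cmod (u m + RtoC eps * w m)%C <= Bu + eps).
      { intros m. eapply Rle_trans. apply Cmod_triangle. rewrite Cmod_mult, Cmod_RtoC, Rabs_pos_eq by lra.
        specialize (Hu m). specialize (Hw1 m). nra. }
      split.
      * split. { now exists (Bu + eps). }
        intros j. destruct (Hw2 ((INR j + INR j0) / eps)) as [N HN]. exists N.
        rewrite (Dv_lin u w (RtoC eps) N Bu 1 Hu Hw1).
        assert (Cmod (RtoC eps * Dv w N)%C <= Cmod (Dv u N + RtoC eps * Dv w N)%C + Cmod (Dv u N)).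
        { replace (RtoC eps * Dv w N)%C with ((Dv u N + RtoC eps * Dv w N) + - Dv u N)%C at 1 by ring.
          eapply Rle_trans. apply Cmod_triangle. rewrite Cmod_opp. lra. }
        rewrite Cmod_mult, Cmod_RtoC, Rabs_pos_eq in H by lra.
        assert (INR j + INR j0 < eps * Cmod (Dv w N)).
        { apply Rmult_lt_reg_r with (/ eps). apply Rinv_0_lt_compat; lra.
          replace (eps * Cmod (Dv w N) * / eps) with (Cmod (Dv w N)) by (field; lra). exact HN. }
        specialize (Hj N). lra.
      * intros m. change (Cmod (u m + RtoC eps * w m - u m)%C <= eps).
        replace (u m + RtoC eps * w m - u m)%C with (RtoC eps * w m)%C by ring.
        rewrite Cmod_mult, Cmod_RtoC, Rabs_pos_eq by lra. specialize (Hw1 m). nra.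
  - exists Oset. split. apply Oset_open.
    intros u. split.
    + intros [Hb Hj] j. split; auto.
    + intros H. split. { destruct (H 0%nat); auto. }
      intros j. destruct (H j) as [_ HN]. auto.
  - intros u [[B HB] Hj] M.
    destruct (archimed M) as [H1 _].
    destruct (Hj (Z.to_nat (up M))) as [N HN].
    exists N, (Dv u N). split. apply (deriv u N B HB).
    assert (M < INR (Z.to_nat (up M))).
    { destruct (Z_le_gt_dec 0 (up M)). rewrite INR_IZR_INZ, Z2Nat.id by auto. lra.
      pose proof (pos_INR (Z.to_nat (up M))). assert (IZR (up M) < 0) by (apply IZR_lt; lia). lra. }
    lra.
Qed.
End Main.

Theorem lemma2p6 (theta : R) (Hirr : irrational theta)
  (Hgrowth : cv_infty (fun n => ln (IZR (cf_q theta (S n))) / IZR (cf_q theta n)))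
  (k : nat -> nat) (Hk : forall n, (k n < k (S n))%nat)
  (z : Cx) (Hz : 1 < Cmod z) :
  exists E : (nat -> Cx) -> Prop,
    linf_dense E /\ linf_Gdelta E /\
    forall u, E u ->
      forall M : R, exists (N : nat) (d : Cx),
        has_cderiv (phi (INR N * theta) (fun n => cf_q theta (k n)) u) z d /\
        M < Cmod d.
Proof.
  exact (main_sec theta Hirr Hgrowth k Hk z Hz).
Qed.
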